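(* Let $0<\beta<1$ and suppose $Y$ has a continuous distribution with support $\mathcal{Y}$, and that: (i) $\operatorname{int}(\mathcal{Y})\cap\operatorname{int}(\mathcal{R}_{\mathcal{X}})$ is connected; (ii) $y\mapsto f(x,y)$ is continuous for every $x\in\mathcal{X}$; (iii) for each $x\in\mathcal{X}$ there exists $x'\in\mathcal{X}$ such that $\operatorname{int}(\mathcal{Y})\cap\operatorname{int}(\mathcal{R}_x\cap\mathcal{R}_{x'})\neq\emptyset$ and $\operatorname{int}(\mathcal{Y})\cap\operatorname{int}(\mathcal{R}_{x'}\setminus\mathcal{R}_x)\neq\emptyset$. Then $\mathcal{R}_{\mathcal{X}}$ satisfies the $\beta$-aggregation condition.
   Context: Let $(\Omega,\mathcal{F},\mathbb{P})$ be a probability space, $Y$ a random vector in $\mathbb{R}^d$ with support $\mathcal{Y}$, $\mathcal{X}\subseteq\mathbb{R}^k$ a set of decisions and $f:\mathcal{X}\times\mathbb{R}^d\to\mathbb{R}$ a loss function with $f(x,Y)$ measurable for all $x$. Write $F_x(z)=\mathbb{P}(f(x,Y)\le z)$ and $F_x^{-1}(\beta)=\inf\{z: F_x(z)\ge\beta\}$. The ($\beta$-)risk region of $x$ is $\mathcal{R}_x=\{y\in\mathbb{R}^d: f(x,y)\ge F_x^{-1}(\beta)\}$ and $\mathcal{R}_{\mathcal{X}}=\bigcup_{x\in\mathcal{X}}\mathcal{R}_x$. A set $\mathcal{R}$ with $\mathcal{R}_{\mathcal{X}}\subseteq\mathcal{R}\subset\mathbb{R}^d$ satisfies the $\beta$-aggregation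 condition if for all $x\in\mathcal{X}$ and all $z'<F_x^{-1}(\beta)$, $\mathbb{P}\big(Y\in\{y: z'<f(x,y)\le F_x^{-1}(\beta)\}\cap\mathcal{R}\big)>0$. $\operatorname{int}$ denotes topological interior. *)

(* Defs.v *)
From HB Require Import structures.
From mathcomp Require Import all_boot all_order all_algebra.
From mathcomp Require Import all_classical all_reals all_analysis.
Set Implicit Arguments. Unset Strict Implicit. Unset Printing Implicit Defensive.
Import Order.TTheory GRing.Theory Num.Theory.
Import numFieldNormedType.Exports.
Local Open Scope classical_set_scope.
Local Open Scope ring_scope.

Section Defs.
Context {dT : measure_display} {T : measurableType dT} {R : realType}
  (P : probability T R) {d k : nat} (Y : T -> 'rV[R]_d).

Definition is_random_vector : Prop :=
  forall U : set 'rV[R]_d, open U -> measurable (Y @^-1` U).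

(* law_support of the law of Y: points all of whose open neighbourhoods have
   positive probability (the smallest closed set of probability one) *)
Definition law_support : set 'rV[R]_d :=
  [set y | forall U : set 'rV[R]_d, open U -> U y -> (0 < P (Y @^-1` U))%E].

Definition continuous_distribution : Prop :=
  forall y : 'rV[R]_d, P (Y @^-1` [set y]) = 0%E.

(* "P(Y \in S) > 0" for a possibly non-measurable S: some event contained in
   {Y \in S} has positive probability (inner probability > 0). *)
Definition pos_prob (S : set 'rV[R]_d) : Prop :=
  exists A : set T, [/\ measurable A, A `<=` Y @^-1` S & (0 < P A)%E].

Variable f : 'rV[R]_k -> 'rV[R]_d -> R.

Definition cdf (x : 'rV[R]_k) (z : R) : \bar R :=
  P [set w | f x (Y w) <= z].

Definition quantile (x : 'rV[R]_k) (beta : R) : R :=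
  inf [set z | (beta%:E <= cdf x z)%E].

Definition risk_region (beta : R) (x : 'rV[R]_k) : set 'rV[R]_d :=
  [set y | quantile x beta <= f x y].

Definition risk_region_X (beta : R) (X : set 'rV[R]_k) : set 'rV[R]_d :=
  \bigcup_(x in X) risk_region beta x.

Definition beta_aggregation (beta : R) (X : set 'rV[R]_k)
    (Rs : set 'rV[R]_d) : Prop :=
  risk_region_X beta X `<=` Rs /\
  forall x, X x -> forall z' : R, z' < quantile x beta ->
    pos_prob ([set y | z' < f x y <= quantile x beta] `&` Rs).

End Defs.

(* Main.v *)
Require Import Defs.
From HB Require Import structures.
From mathcomp Require Import all_boot all_order all_algebra.
From mathcomp Require Import all_classical all_reals all_analysis.
Import Order.TTheory GRing.Theory Num.Theory.
Import numFieldNormedType.Exports.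
Local Open Scope classical_set_scope.
Local Open Scope ring_scope.

Theorem mainTheorem3 (dT : measure_display) (T : measurableType dT)
  (R : realType) (P : probability T R) (d k : nat) (Y : T -> 'rV[R]_d)
  (X : set 'rV[R]_k) (f : 'rV[R]_k -> 'rV[R]_d -> R) (beta : R) :
  0 < beta < 1 ->
  is_random_vector Y ->
  (forall x, measurable_fun setT (fun w => f x (Y w))) ->
  continuous_distribution P Y ->
  connected (interior (law_support P Y) `&` interior (risk_region_X P Y f beta X)) ->
  (forall x, X x -> continuous (f x)) ->
  (forall x, X x -> exists2 x', X x' &
     (interior (law_support P Y) `&`
        interior (risk_region P Y f beta x `&` risk_region P Y f beta x')
        !=set0) /\
     (interior (law_support P Y) `&`
        interior (risk_region P Y f beta x' `\` risk_region P Y f beta x)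
        !=set0)) ->
  beta_aggregation P Y f beta X (risk_region_X P Y f beta X).
Proof.
move=> _ rvY _ _ cS fc H3.
split=> // x Xx z' z'q.
set q := quantile P Y f x beta.
set S := interior (law_support P Y) `&` interior (risk_region_X P Y f beta X).
have [x' Xx' [[y1 [Ly1 Iy1]] [y2 [Ly2 Iy2]]]] := H3 x Xx.
have RxX : forall u, X u -> risk_region P Y f beta u `<=` risk_region_X P Y f beta X.
  by move=> u Xu y Ry; exists u.
have Sy1 : S y1.
  split => //; apply: (interiorS _ Iy1) => y [Ry _]; exact: RxX Xx _ Ry.
have Sy2 : S y2.
  split => //; apply: (interiorS _ Iy2) => y [Ry _]; exact: RxX Xx' _ Ry.
have fy1 : q <= f x y1 by have [] := interior_subset Iy1.
have fy2 : f x y2 < q.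
  have [_] := interior_subset Iy2; rewrite /risk_region /= -/q.
  by move/negP; rewrite -ltNge.
set c := Num.max z' (f x y2).
have cq : c < q by rewrite /c gt_max z'q fy2.
set m := (c + q) / 2.
have cm : c < m by rewrite /m ltr_pdivlMr // mulr2n mulrDr mulr1 ltrD2l.
have mq : m < q by rewrite /m ltr_pdivrMr // mulr2n mulrDr mulr1 ltrD2r.
have cI : connected (f x @` S).
  apply: connected_continuous_connected => //.
  by apply: continuous_subspaceT => y; exact: fc.
have [y Sy fym] : (f x @` S) m.
  apply: (proj1 (connected_intervalP _) cI (f x y2) (f x y1)).
  - by exists y2.
  - by exists y1.
  apply/andP; split.
    by apply: ltW; apply: le_lt_trans cm; rewrite /c le_max lexx orbT.
  by apply: ltW; apply: lt_le_trans fy1.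
set U := S `&` (f x @^-1` [set t | c < t] `&` f x @^-1` [set t | t < q]).
have oU : open U.
  apply: openI; first by apply: openI; exact: open_interior.
  apply: openI; apply: open_comp; try (move=> ? _; exact: fc).
  - exact: open_gt.
  - exact: open_lt.
have Uy : U y by split => //; split; rewrite /preimage /= fym.
exists (Y @^-1` U); split.
- exact: rvY.
- move=> w [[_ RX] [cf fq]]; split; last exact: interior_subset.
  apply/andP; split; last exact: ltW.
  by apply: le_lt_trans cf; rewrite /c le_max lexx.
- by have [Ly _] := Sy; exact: (interior_subset Ly).
Qed.
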